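(* Let $k$ be a field, $e \geq 1$, and $M$ a finite-dimensional $k[T]/T^e$-module. Let $\mu = (d_1, \dots, d_e)$ be a tuple of nonnegative integers, $\sigma$ a permutation of $\{1,\dots,e\}$ and $\mu' = (d_{\sigma(1)}, \dots, d_{\sigma(e)})$. Then there exists a PR datum of type $\mu$ for $M$ if and only if there exists a PR datum of type $\mu'$ for $M$.
   Context: A PR datum of type $(d_1,\dots,d_e)$ for $M$ is a filtration $0 = M_0 \subseteq M_1 \subseteq \dots \subseteq M_e = M$ by $k$-vector subspaces such that $T \cdot M_i \subseteq M_{i-1}$ and $\dim_k M_i/M_{i-1} = d_i$ for $1 \leq i \leq e$. *)

(* Defs.v *)
From HB Require Import structures.
From mathcomp Require Import all_boot all_order all_algebra all_fingroup.
Set Implicit Arguments. Unset Strict Implicit. Unset Printing Implicit Defensive.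
Import GRing.Theory.
Local Open Scope ring_scope.

(* A finite-dimensional k[T]/T^e-module M is modelled as the k-space of row
   vectors 'rV[k]_n with T acting by right multiplication by a matrix
   T : 'M[k]_n satisfying T ^+ e = 0.  k-subspaces of M are row spaces of
   n x n matrices (mxalgebra).  The tuple (d_1,...,d_e) is d : 'I_e -> nat,
   with d_(i+1) = d i (0-based indexing). *)

Definition PR_datum (k : fieldType) (n e : nat) (T : 'M[k]_n)
    (d : 'I_e -> nat) (Mf : nat -> 'M[k]_n) : Prop :=
  [/\ (Mf 0%N == (0 : 'M[k]_n))%MS,
      (Mf e == 1%:M)%MS &
      forall i : 'I_e,
        [/\ (Mf i <= Mf i.+1)%MS,
            (Mf i.+1 *m T <= Mf i)%MS &
            \rank (Mf i.+1) = (\rank (Mf i) + d i)%N]].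

(* Main.v *)
Require Import Defs.
From HB Require Import structures.
From mathcomp Require Import all_boot all_order all_algebra all_fingroup.
From mathcomp Require Import zify.
Local Open Scope ring_scope.
Set Implicit Arguments. Unset Strict Implicit.

Section Aux.
Variable k : fieldType.
Variable n : nat.

Lemma rank_coker (A X : 'M[k]_n) :
  (\rank (X *m cokermx A) + \rank A)%N = \rank (A + X)%MS.
Proof.
have := mxrank_mul_ker (A + X)%MS (cokermx A).
rewrite (eqmx_rank (B := X *m cokermx A)); last first.
  apply/eqmxP; apply: eqmx_trans (addsmxMr _ _ _) _.
  rewrite mulmx_coker; exact: adds0mx.
rewrite (eqmx_rank (A := ((A + X) :&: kermx (cokermx A))%MS) (B := A)); first by [].
  
apply/andP; split.
  apply/rV_subP => v /(submx_trans)/(_ (capmxSr _ _)).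
  by rewrite sub_kermx submxE.
by rewrite sub_capmx addsmxSl sub_kermx /=; apply/eqP; exact: mulmx_coker.
Qed.

Lemma rank_id (A C T : 'M[k]_n) :
  (\rank (A + C *m T)%MS + \rank (C :&: kermx (T *m cokermx A))%MS
   = \rank A + \rank C)%N.
Proof.
have := mxrank_mul_ker C (T *m cokermx A).
have := rank_coker A (C *m T).
rewrite mulmxA. lia.
Qed.

Lemma mid_sub (L U : 'M[k]_n) (m : nat) : (L <= U)%MS ->
  (\rank L + m <= \rank U)%N ->
  exists B : 'M[k]_n, [/\ (L <= B)%MS, (B <= U)%MS & \rank B = (\rank L + m)%N].
Proof.
move=> sLU; elim: m => [|m IH] hm.
  by exists L; rewrite addn0 submx_refl.
have [B [sLB sBU rB]] := IH ltac:(lia).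
have nUB : ~~ (U <= B)%MS.
  apply/negP => sUB; have := mxrankS sUB; rewrite rB; lia.
case/row_subPn: nUB => i ni.
exists (B + row i U)%MS; split.
- exact: submx_trans sLB (addsmxSl _ _).
- by rewrite addsmx_sub sBU row_sub.
- have h1 := mxrank_leqif_sup (addsmxSl B (row i U)).
  have h2 : (\rank B < \rank (B + row i U))%N.
    rewrite (ltn_leqif h1); apply/negP => h; apply/negP: ni; rewrite negbK.
    exact: submx_trans (addsmxSr _ _) h.
  have h3 := (mxrank_adds_leqif B (row i U)).1.
  have h4 := rank_leq_row (row i U).
  lia.
Qed.
End Aux.

Section PR.
Variable k : fieldType.
Variable n : nat.
Variable T : 'M[k]_n.

Definition PRs (ds : seq nat) (Mf : nat -> 'M[k]_n) : Prop :=
  [/\ (Mf 0%N == (0 : 'M[k]_n))%MS, (Mf (size ds) == 1%:M)%MS &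
      forall i, (i < size ds)%N ->
        [/\ (Mf i <= Mf i.+1)%MS, (Mf i.+1 *m T <= Mf i)%MS &
            \rank (Mf i.+1) = (\rank (Mf i) + nth 0%N ds i)%N]].

Lemma PRs_stable ds Mf : PRs ds Mf -> forall i, (i <= size ds)%N ->
  (Mf i *m T <= Mf i)%MS.
Proof.
case=> h0 _ h [|i] hi.
  have H0 : (Mf 0%N <= (0 : 'M[k]_n))%MS by case/andP: h0.
  by rewrite submx0 in H0; rewrite (eqP H0) mul0mx sub0mx.
have [h1 h2 _] := h i hi.
exact: submx_trans h2 h1.
Qed.

Lemma nth_swap_other (a b : seq nat) x y j :
  j != size a -> j != (size a).+1 ->
  nth 0%N (a ++ x :: y :: b) j = nth 0%N (a ++ y :: x :: b) j.
Proof.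
move=> h1 h2; rewrite !nth_cat; case: ltnP => // h.
case E: (j - size a)%N => [|[|m]] //; lia.
Qed.

Lemma arL1 i m : (i < i + m.+2)%N. Proof. lia. Qed.
Lemma arL2 i m : (i.+1 < i + m.+2)%N. Proof. lia. Qed.
Lemma arL3 i m : (i <= i + m.+2)%N. Proof. lia. Qed.
Lemma arL4 i m : (i + m.+2 == i.+1) = false. Proof. lia. Qed.
Lemma arith l u a b0 c x y : (l + u = a + c)%N -> (l <= b0)%N -> (b0 <= u)%N ->
  b0 = (a + x)%N -> c = (b0 + y)%N ->
  (l + (a + y - l) <= u)%N /\ (l + (a + y - l) = a + y)%N.
Proof. lia. Qed.

Lemma swap_step (a b : seq nat) x y :
  (exists Mf, PRs (a ++ x :: y :: b) Mf) ->
  (exists Mf, PRs (a ++ y :: x :: b) Mf).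
Proof.
case=> Mf HP; have HS := PRs_stable HP.
case: HP => h0 h1 h.
set i := size a.
have hsz : size (a ++ y :: x :: b) = size (a ++ x :: y :: b).
  by rewrite !size_cat.
have hszi : size (a ++ x :: y :: b) = (i + (size b).+2)%N.
  by rewrite size_cat.
have [hA1 hA2 hA3] := h i ltac:(rewrite hszi; exact: arL1).
have [hC1 hC2 hC3] := h i.+1 ltac:(rewrite hszi; exact: arL2).
have hSA := HS i ltac:(rewrite hszi; exact: arL3).
have nx : nth 0%N (a ++ x :: y :: b) i = x by rewrite nth_cat ltnn subnn.
have ny : nth 0%N (a ++ x :: y :: b) i.+1 = y.
  by rewrite nth_cat ltnNge leqnSn /= subSn // subnn.
have nx' : nth 0%N (a ++ y :: x :: b) i.+1 = x.
  by rewrite nth_cat ltnNge leqnSn /= subSn // subnn.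
have ny' : nth 0%N (a ++ y :: x :: b) i = y by rewrite nth_cat ltnn subnn.
rewrite nx in hA3; rewrite ny in hC3.
move: hA1 hA2 hA3 hC1 hC2 hC3 hSA.
set A := Mf i; set B0 := Mf i.+1; set C := Mf i.+2.
move=> hA1 hA2 hA3 hC1 hC2 hC3 hSA.
set L := (A + C *m T)%MS; set U := (C :&: kermx (T *m cokermx A))%MS.
have hid := rank_id A C T; fold L U in hid.
have subU : forall X : 'M[k]_n, (X <= U)%MS = (X <= C)%MS && (X *m T <= A)%MS.
  by move=> X; rewrite sub_capmx sub_kermx [(X *m T <= A)%MS]submxE mulmxA.
have sLB0 : (L <= B0)%MS by rewrite addsmx_sub hA1 hC2.
have sB0U : (B0 <= U)%MS by rewrite subU hC1 hA2.
have rL := mxrankS sLB0; have rU := mxrankS sB0U.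
have [ar1 ar2] := arith hid rL rU hA3 hC3.
have [B [sLB sBU rB]] := mid_sub (m := (\rank A + y - \rank L)%N)
   (submx_trans sLB0 sB0U) ar1.
rewrite ar2 in rB.
have sAB : (A <= B)%MS := submx_trans (addsmxSl _ _) sLB.
have sCTB : (C *m T <= B)%MS := submx_trans (addsmxSr _ _) sLB.
move: sBU; rewrite subU => /andP[sBC sBTA].
exists (fun j => if j == i.+1 then B else Mf j); split.
- by [].
- by rewrite hsz hszi arL4 -hszi.
- move=> j; rewrite hsz => hj.
  case: (eqVneq j i) => [->|nji].
    rewrite eqxx (ltn_eqF (ltnSn i)).
    by rewrite sAB sBTA ny'; split.
  case: (eqVneq j i.+1) => [->|nji1].
    rewrite ?eqxx (gtn_eqF (ltnSn i.+1)).
    rewrite sBC sCTB nx'; split => //.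
    by rewrite hC3 hA3 rB -!addnA (addnC x).
  rewrite ?eqSS ?(negbTE nji) ?(negbTE nji1).
  rewrite -nth_swap_other //.
  exact: h.
Qed.

Lemma perm_closure (P : seq nat -> Prop)
  (H : forall a b x y, P (a ++ x :: y :: b) -> P (a ++ y :: x :: b)) :
  forall s t, perm_eq s t -> forall pre, P (pre ++ s) -> P (pre ++ t).
Proof.
have move_r : forall x t2 t1 pre, P (pre ++ x :: t1 ++ t2) -> P (pre ++ t1 ++ x :: t2).
  move=> x t2; elim=> [|z t1 IH] pre //= HP.
  have := H pre (t1 ++ t2) x z HP.
  by rewrite -cat_rcons => /IH; rewrite cat_rcons.
elim=> [|x s IH] t.
  by rewrite perm_sym => /perm_nilP ->.
move=> pst pre HP.
have xt : x \in t by rewrite -(perm_mem pst) mem_head.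
case/splitPr: xt pst => t1 t2 pst.
have ps' : perm_eq s (t1 ++ t2).
  rewrite -(perm_cons x); apply: (perm_trans pst).
  by rewrite -cat1s perm_catCA.
apply: move_r.
have := IH _ ps' (rcons pre x); rewrite !cat_rcons; apply.
by rewrite -cat_rcons cat_rcons.
Qed.

Lemma PRs_perm s t : perm_eq s t ->
  (exists Mf, PRs s Mf) -> (exists Mf, PRs t Mf).
Proof.
move=> pst.
have := @perm_closure (fun u => exists Mf, PRs u Mf) _ s t pst [::].
apply. move=> a b x y; exact: swap_step.
Qed.

Lemma PR_iff e (d : 'I_e -> nat) Mf :
  PR_datum T d Mf <-> PRs (map d (enum 'I_e)) Mf.
Proof.
rewrite /PR_datum /PRs size_map size_enum_ord; split.
  case=> h0 h1 h; split=> // j hj.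
  have := h (Ordinal hj); rewrite /=.
  rewrite (nth_map (Ordinal hj)) ?size_enum_ord //.
  have -> : nth (Ordinal hj) (enum 'I_e) j = Ordinal hj.
    exact: (nth_ord_enum (Ordinal hj) (Ordinal hj)).
  by [].
case=> h0 h1 h; split=> // i.
have := h i (ltn_ord i).
by rewrite (nth_map i) ?size_enum_ord // nth_ord_enum.
Qed.
End PR.

Theorem mainTheorem4 (k : fieldType) (e : nat) (he : (1 <= e)%N)
    (n : nat) (T : 'M[k]_n) (hT : T ^+ e = 0)
    (d : 'I_e -> nat) (s : 'S_e) :
  (exists Mf : nat -> 'M[k]_n, PR_datum T d Mf) <->
  (exists Mf : nat -> 'M[k]_n, PR_datum T (fun i => d (s i)) Mf).
Proof.
have pe : perm_eq (map d (enum 'I_e)) (map (fun i => d (s i)) (enum 'I_e)).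
  rewrite (map_comp d s); apply: perm_map.
  apply: uniq_perm; first exact: enum_uniq.
    by rewrite (map_inj_uniq (@perm_inj _ s)) enum_uniq.
  move=> x; rewrite mem_enum; symmetry; apply/mapP.
  by exists (s^-1 x)%g; rewrite ?mem_enum ?permKV.
split.
  case=> Mf /PR_iff HP; have [Mf' H'] := PRs_perm pe (ex_intro _ Mf HP).
  by exists Mf'; apply/PR_iff.
case=> Mf /PR_iff HP.
have pe' : perm_eq (map (fun i => d (s i)) (enum 'I_e)) (map d (enum 'I_e)).
  by rewrite perm_sym.
have [Mf' H'] := PRs_perm pe'  (ex_intro _ Mf HP).
by exists Mf'; apply/PR_iff.
Qed.
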